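(* Let $\Gamma\in[0,1]$, $\Lambda>0$, $d_0\in(0,1]$, and let the thresholds be exponentially distributed with parameter $\Lambda$, i.e. $F(x)=1-e^{-\Lambda x}$, so that the hazard function $h_F(x)=f(x)/(1-F(x))$ equals $\Lambda$. Then (1) the HILT fluid-limit equation $\dot b=d$, $\dot d=h_F(\Gamma b)\Gamma d(1-b-d)-d$ becomes $$\dot b=d,\qquad \dot d=\Lambda\Gamma d(1-b-d)-d,$$ and (2) for its solution with $b(0)=0$, $d(0)=d_0$, the limit $b_\infty=\lim_{t\to\infty}b(t)$ exists and satisfies $$b_\infty=1-(1-d_0)e^{-\Lambda\Gamma b_\infty}.$$ *)

(* Defs.v *)
From Stdlib Require Import Reals.
Open Scope R_scope.

Definition expF (Lam x : R) : R := 1 - exp (- Lam * x).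
Definition expf (Lam x : R) : R := Lam * exp (- Lam * x).

Definition hazard (F f : R -> R) (x : R) : R := f x / (1 - F x).

Definition HILT_solution (h : R -> R) (Gam : R) (b d : R -> R) : Prop :=
  (forall t, 0 < t -> derivable_pt_lim b t (d t)) /\
  (forall t, 0 < t ->
     derivable_pt_lim d t (h (Gam * b t) * Gam * d t * (1 - b t - d t) - d t)) /\
  (forall eps, 0 < eps -> exists delta, 0 < delta /\
     forall t, 0 <= t < delta -> Rabs (b t - b 0) < eps /\ Rabs (d t - d 0) < eps).

Definition lim_infty (g : R -> R) (l : R) : Prop :=
  forall eps, 0 < eps -> exists T, forall t, T <= t -> Rabs (g t - l) < eps.

(* Main.v *)
Require Import Defs.
From Stdlib Require Import Reals.
From Stdlib Require Import Lra Classical.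
From Coquelicot Require Import Coquelicot.
Open Scope R_scope.

Lemma dpl_eq f x l l' : derivable_pt_lim f x l -> l = l' -> derivable_pt_lim f x l'.
Proof. intros H <-; exact H. Qed.

Lemma cont_eps f x : continuity_pt f x -> forall eps, 0<eps -> exists alp, 0<alp /\
  forall y, Rabs (y - x) < alp -> Rabs (f y - f x) < eps.
Proof.
  intros H eps He. destruct (H eps He) as [alp [Ha Hf]]. exists alp; split; auto.
  intros y Hy. destruct (Req_dec y x) as [->|Hne].
  - rewrite Rminus_diag, Rabs_R0; auto.
  - apply (Hf y). split. split; [exact I| auto]. exact Hy.
Qed.

Lemma cont_ind (P : R -> Prop) :
 (exists del, 0 < del /\ forall t, 0 <= t < del -> P t) ->
 (forall s, 0 < s -> (forall t, 0 <= t < s -> P t) -> exists e, 0 < e /\ forall t, 0 <= t < s + e -> P t) ->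
 forall t, 0 <= t -> P t.
Proof.
 intros [del [Hdel Hb]] Hs t Ht.
 destruct (classic (P t)) as [|HnP]; auto. exfalso.
 set (E := fun x => 0 <= x /\ forall u, 0 <= u < x -> P u).
 assert (HE: bound E).
 { exists t. intros x [Hx Hx']. destruct (Rle_dec x t); auto. exfalso; apply HnP; apply Hx'; lra. }
 destruct (completeness E HE) as [m [Hub Hlub]].
 { exists 0. split; [lra| intros; lra]. }
 assert (Hm: del <= m). { apply Hub. split; [lra|auto]. }
 assert (Hall: forall u, 0 <= u < m -> P u).
 { intros u Hu. destruct (classic (exists x, E x /\ u < x)) as [[x [[_ Hx] Hux]]|Hno].
   - apply Hx; lra.
   - exfalso. assert (m <= u). { apply Hlub. intros x Ex. destruct (Rle_dec x u); auto.
       exfalso; apply Hno; exists x; split; auto; lra. } lra. }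
 destruct (Hs m ltac:(lra) Hall) as [e [He He']].
 assert (m + e <= m). { apply Hub. split; [lra|auto]. } lra.
Qed.

Lemma dK a b d t D : derivable_pt_lim b t (d t) -> derivable_pt_lim d t D ->
  derivable_pt_lim (fun t => (1 - b t - d t) * exp (a * b t)) t
   ((- d t - D) * exp (a * b t) + (1 - b t - d t) * (exp (a * b t) * (a * d t))).
Proof.
  intros Hb Hd.
  change (derivable_pt_lim (mult_fct (minus_fct (minus_fct (fct_cte 1) b) d)
     (comp exp (mult_real_fct a b))) t
   ((- d t - D) * exp (a * b t) + (1 - b t - d t) * (exp (a * b t) * (a * d t)))).
  eapply dpl_eq. apply derivable_pt_lim_mult.
  - apply derivable_pt_lim_minus. apply derivable_pt_lim_minus.
    apply derivable_pt_lim_const. exact Hb. exact Hd.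
  - apply derivable_pt_lim_comp. apply derivable_pt_lim_scal. exact Hb. apply derivable_pt_lim_exp.
  - unfold mult_real_fct, minus_fct, fct_cte, comp. ring.
Qed.

Lemma dW d t D : derivable_pt_lim d t D ->
  derivable_pt_lim (fun t => d t * exp t) t (D * exp t + d t * exp t).
Proof.
  intros Hd. change (derivable_pt_lim (mult_fct d exp) t (D * exp t + d t * exp t)).
  apply derivable_pt_lim_mult. exact Hd. apply derivable_pt_lim_exp.
Qed.

Lemma rc_lim (f : R -> R) : (forall eps, 0<eps -> exists delta, 0<delta /\
   forall t, 0<=t<delta -> Rabs(f t - f 0) < eps) -> filterlim f (at_right 0) (locally (f 0)).
Proof.
  intros H. apply filterlim_locally. intros eps.
  destruct (H eps (cond_pos eps)) as [del [Hd Hf]]. exists (mkposreal del Hd).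
  intros y Hy Hy0. unfold ball in *; simpl in *; unfold AbsRing_ball, abs, minus, plus, opp in *; simpl in *.
  apply Hf. apply Rabs_def2 in Hy. lra.
Qed.

Lemma K_lim (a d0 : R) (b d : R -> R) (k : R)
  (Hrc : forall eps, 0 < eps -> exists delta, 0 < delta /\
     forall t, 0 <= t < delta -> Rabs (b t - b 0) < eps /\ Rabs (d t - d 0) < eps)
  (hb0 : b 0 = 0) (hd0 : d 0 = d0)
  (Hk : forall s, 0 < s -> (1 - b s - d s) * exp (a * b s) = k) : k = 1 - d0.
Proof.
  assert (Fb : filterlim b (at_right 0) (locally (b 0))).
  { apply rc_lim. intros eps He. destruct (Hrc eps He) as [del [Hd H]]. exists del; split; auto.
    intros t Ht; apply H; auto. }
  assert (Fd : filterlim d (at_right 0) (locally (d 0))).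
  { apply rc_lim. intros eps He. destruct (Hrc eps He) as [del [Hd H]]. exists del; split; auto.
    intros t Ht; apply H; auto. }
  assert (F1 := filterlim_comp_2 _ _ plus Fb Fd (filterlim_plus (b 0) (d 0))).
  assert (C2 : filterlim (fun x : R => 1 - x) (locally (plus (b 0) (d 0))) (locally (1 - plus (b 0) (d 0)))).
  { apply (continuity_pt_filterlim (fun x => 1 - x)). reg. }
  assert (F2 := filterlim_comp _ _ _ _ _ _ _ _ F1 C2).
  assert (C3 : filterlim (fun x : R => exp (a * x)) (locally (b 0)) (locally (exp (a * b 0)))).
  { apply (continuity_pt_filterlim (fun x => exp (a * x))). reg. }
  assert (F3 := filterlim_comp _ _ _ _ _ _ _ _ Fb C3).
  assert (F4 := filterlim_comp_2 _ _ mult F2 F3 (filterlim_mult _ _)).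
  assert (F5 : filterlim (fun _ : R => k) (at_right 0)
      (locally (mult (1 - plus (b 0) (d 0)) (exp (a * b 0))))).
  { eapply filterlim_ext_loc; [|exact F4]. exists (mkposreal 1 Rlt_0_1).
    intros y _ Hy. rewrite <- (Hk y Hy). unfold mult, plus; simpl. ring. }
  assert (F6 : filterlim (fun _ : R => k) (at_right 0) (locally k)) by apply filterlim_const.
  assert (E := filterlim_locally_unique _ _ _ F6 F5).
  rewrite E. unfold mult, plus; simpl. rewrite hb0, hd0, Rmult_0_r, exp_0. ring.
Qed.

Theorem theorem3 (Gam Lam d0 : R) (b d : R -> R)
  (hGam : 0 <= Gam <= 1) (hLam : 0 < Lam) (hd0 : 0 < d0 <= 1)
  (hsol : HILT_solution (hazard (expF Lam) (expf Lam)) Gam b d)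
  (hb0 : b 0 = 0) (hdinit : d 0 = d0) :
  (forall x, hazard (expF Lam) (expf Lam) x = Lam) /\
  (forall t, 0 < t ->
     derivable_pt_lim d t (Lam * Gam * d t * (1 - b t - d t) - d t)) /\
  (exists binf, lim_infty b binf /\
     binf = 1 - (1 - d0) * exp (- Lam * Gam * binf)).
Proof.
  assert (hz: forall x, hazard (expF Lam) (expf Lam) x = Lam).
  { intro x; unfold hazard, expF, expf. assert (exp (-Lam*x) > 0) by apply exp_pos. field. lra. }
  destruct hsol as [Hb [Hd Hrc]].
  assert (Hd2: forall t, 0<t -> derivable_pt_lim d t (Lam*Gam*d t*(1-b t-d t) - d t)).
  { intros t Ht. rewrite <- (hz (Gam*b t)); auto. }
  split; [exact hz| split; [exact Hd2|]].
  set (a := Lam*Gam) in *. assert (Ha: 0 <= a) by (unfold a; nra).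
  set (D := fun t => a*d t*(1-b t-d t) - d t) in *.
  assert (HK0: forall c, 0 < c -> derivable_pt_lim (fun t => (1 - b t - d t) * exp (a * b t)) c 0).
  { intros c Hc. eapply dpl_eq. apply dK. apply Hb; auto. apply Hd2; auto. unfold D; ring. }
  assert (HKeq: forall s t, 0 < s -> s < t ->
     (1 - b s - d s) * exp (a * b s) = (1 - b t - d t) * exp (a * b t)).
  { intros s t Hs Hst. destruct (MVT_cor2 (fun t => (1 - b t - d t) * exp (a * b t)) (fun _ => 0) s t Hst)
      as [c [Hc _]]. intros c Hc; apply HK0; lra. lra. }
  assert (HK: forall t, 0 < t -> (1 - b t - d t) * exp (a * b t) = 1 - d0).
  { intros t Ht. apply (K_lim a d0 b d); auto. intros s Hs.
    destruct (Rtotal_order s t) as [Hq|[Hq|Hq]]. apply HKeq; auto. subst; auto. symmetry; apply HKeq; auto. }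
  assert (Hc: forall t, 0 < t -> 1 - b t - d t = (1 - d0) * exp (-(a * b t))).
  { intros t Ht. rewrite <- (HK t Ht), exp_Ropp. field. apply Rgt_not_eq, exp_pos. }
  assert (Hcpos: forall t, 0 < t -> 0 <= 1 - b t - d t).
  { intros t Ht. rewrite Hc; auto. apply Rmult_le_pos. lra. left; apply exp_pos. }
  assert (Hdpos: forall t, 0 <= t -> 0 < d t).
  { apply cont_ind.
    - destruct (Hrc d0 ltac:(lra)) as [del [Hdel H]]. exists del; split; auto.
      intros t Ht. destruct (H t Ht) as [_ H2]. apply Rabs_def2 in H2. lra.
    - intros s Hs Hall.
      destruct (MVT_cor2 (fun t => d t * exp t) (fun t => D t * exp t + d t * exp t) (s/2) s ltac:(lra))
        as [c [Hmvt Hcc]].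
      { intros c Hc'. apply dW. apply Hd2. lra. }
      assert (Hdc: 0 < d c) by (apply Hall; lra).
      assert (Hpos: 0 <= D c * exp c + d c * exp c).
      { unfold D. replace ((a * d c * (1 - b c - d c) - d c) * exp c + d c * exp c)
          with (a * d c * (1 - b c - d c) * exp c) by ring.
        apply Rmult_le_pos. apply Rmult_le_pos. nra. apply Hcpos; lra. left; apply exp_pos. }
      assert (Hds2: 0 < d (s/2)) by (apply Hall; lra).
      assert (Hes: 0 < exp s) by apply exp_pos. assert (0 < exp (s/2)) by apply exp_pos.
      assert (Hds: 0 < d s).
      { assert (0 < d s * exp s) by nra. destruct (Rlt_le_dec 0 (d s)); auto. nra. }
      assert (Hcont: continuity_pt d s).
      { apply derivable_continuous_pt. exists (D s). apply Hd2; auto. }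
      destruct (cont_eps d s Hcont (d s) Hds) as [alp [Halp Hf]].
      exists alp; split; auto. intros t Ht.
      destruct (Rlt_le_dec t s). apply Hall; lra.
      assert (Rabs (d t - d s) < d s). { apply Hf. apply Rabs_def1; lra. }
      apply Rabs_def2 in H0. lra. }
  assert (Hbinc: forall s t, 0 < s -> s < t -> b s < b t).
  { intros s t Hs Hst. destruct (MVT_cor2 b d s t Hst) as [c [Hm Hc']].
    intros c Hc'; apply Hb; lra. assert (0 < d c) by (apply Hdpos; lra). nra. }
  assert (Hblt1: forall t, 0 < t -> b t < 1).
  { intros t Ht. assert (0 < d t) by (apply Hdpos; lra). assert (Hq := Hcpos t Ht). lra. }
  set (E := fun x => exists t, 0 < t /\ x = b t).
  destruct (completeness E) as [L [Hub Hlub]].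
  { exists 1. intros x [t [Ht ->]]. left; apply Hblt1; auto. }
  { exists (b 1). exists 1; split; auto; lra. }
  assert (HbL: forall t, 0 < t -> b t <= L). { intros t Ht. apply Hub. exists t; auto. }
  assert (Hlim: lim_infty b L).
  { intros eps Heps.
    assert (Hex: exists t0, 0 < t0 /\ L - eps < b t0).
    { apply NNPP. intro Hno. assert (L <= L - eps). 2: lra.
      apply Hlub. intros x [t [Ht ->]]. destruct (Rle_dec (b t) (L - eps)); auto.
      exfalso; apply Hno; exists t; split; auto; lra. }
    destruct Hex as [t0 [Ht0 Hbt0]]. exists t0. intros t Ht.
    assert (b t0 <= b t). { destruct (Req_dec t0 t). subst; lra. left; apply Hbinc; lra. }
    assert (b t <= L) by (apply HbL; lra). apply Rabs_def1; lra. }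
  set (ph := fun x => 1 - x - (1 - d0) * exp (-(a * x))).
  assert (Hph: forall t, 0 < t -> d t = ph (b t)).
  { intros t Ht. unfold ph. rewrite <- Hc; auto. ring. }
  assert (Hphc: continuity_pt ph L) by (unfold ph; reg).
  assert (HphL: ph L = 0).
  { destruct (Rtotal_order (ph L) 0) as [Hn|[Hz|Hp]]; auto; exfalso.
    - destruct (cont_eps ph L Hphc (- ph L) ltac:(lra)) as [alp [Halp Hf]].
      destruct (Hlim alp Halp) as [T HT]. set (t := Rmax T 1).
      assert (T <= t /\ 1 <= t) by (split; [apply Rmax_l|apply Rmax_r]).
      assert (H1 := Hf (b t) (HT t ltac:(lra))). apply Rabs_def2 in H1.
      assert (Hdt: 0 < d t) by (apply Hdpos; lra). rewrite Hph in Hdt by lra. lra.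
    - destruct (cont_eps ph L Hphc (ph L / 2) ltac:(lra)) as [alp [Halp Hf]].
      destruct (Hlim alp Halp) as [T HT]. set (T1 := Rmax T 1).
      assert (T <= T1 /\ 1 <= T1) by (split; [apply Rmax_l|apply Rmax_r]).
      assert (Hdl: forall t, T1 <= t -> ph L / 2 < d t).
      { intros t Ht. assert (H1 := Hf (b t) (HT t ltac:(lra))). apply Rabs_def2 in H1.
        rewrite Hph by lra. lra. }
      assert (HbT1 : b T1 <= L) by (apply HbL; lra).
      set (t2 := T1 + 2 * (L - b T1 + 1) / ph L).
      assert (Ht2 : T1 < t2).
      { unfold t2. assert (0 < 2 * (L - b T1 + 1) / ph L). apply Rdiv_lt_0_compat; lra. lra. }
      destruct (MVT_cor2 b d T1 t2 Ht2) as [c [Hm Hcc]].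
      { intros c Hc'; apply Hb; lra. }
      assert (Hdc := Hdl c ltac:(lra)).
      assert (Heq : ph L / 2 * (t2 - T1) = L - b T1 + 1) by (unfold t2; field; lra).
      assert (ph L / 2 * (t2 - T1) < d c * (t2 - T1)) by (apply Rmult_lt_compat_r; lra).
      assert (b t2 <= L) by (apply HbL; lra). lra. }
  exists L; split; auto.
  replace (- Lam * Gam * L) with (-(a * L)) by (unfold a; ring).
  unfold ph in HphL. lra.
Qed.
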